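(* Let $K$ be a number field and let $\alpha=p/q$ be a positive rational number with $\gcd(p,q)=1$ which is not an integer and is not of the form $1/n$ for an integer $n$. Let $F\in K((x))$ be a Laurent series such that there exist $d\ge 0$ and polynomials $P_0,\dots,P_d\in K[x]$ with $P_d\ne0$ and $\sum_{i=0}^d P_i(x)F(x^{\alpha^i})=0$. Then there is a Laurent series $G\in K((x))$ with $F(x)=G(x^{q^d})$.
   Context: For a Laurent series $F=\sum_i f_ix^i$ and $\gamma>0$, $F(x^\gamma)=\sum_i f_i x^{\gamma i}$, regarded as a Hahn series (formal series with well-ordered support in $\mathbb{R}$); the equation holds in the field of such Hahn series over $K$. *)

(* Defs.v *)
From HB Require Import structures.
From mathcomp Require Import all_boot all_order all_algebra all_field.
Set Implicit Arguments. Unset Strict Implicit. Unset Printing Implicit Defensive.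
Import Order.TTheory GRing.Theory Num.Theory.
Local Open Scope ring_scope.

(* A Laurent series over K: coefficient function int -> K whose support is
   bounded below. *)
Definition laurent (K : Type) (z : K) (f : int -> K) : Prop :=
  exists N : int, forall n : int, n < N -> f n = z.

(* Series with rational exponents (the Hahn series we need all have support
   in a finitely generated subgroup of Q), given by their coefficient
   function rat -> K. *)

(* F(x^g) for a Laurent series F (coefficients f) and g : rat, g > 0:
   the coefficient of x^e is f (e/g) if e/g is an integer, 0 otherwise. *)
Definition hsubst (K : fieldType) (f : int -> K) (g : rat) : rat -> K :=
  fun e => let r := e / g in if denq r == 1 then f (numq r) else 0.

Definition hmulpoly (K : fieldType) (P : {poly K}) (s : rat -> K) : rat -> K :=
  fun e => \sum_(j < size P) P`_j * s (e - j%:R).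

(* G(x^m) for a Laurent series G (coefficients g) and m a positive integer. *)
Definition lsubst (K : fieldType) (g : int -> K) (m : nat) : int -> K :=
  fun n => if (m%:Z %| n)%Z then g (n %/ m%:Z)%Z else 0.

(* Main.v *)
Require Import Defs.
From HB Require Import structures.
From mathcomp Require Import all_boot all_order all_algebra all_field.
From mathcomp Require Import ring lra zify.
From Stdlib Require Import FunctionalExtensionality.
Import Order.TTheory GRing.Theory Num.Theory.
Local Open Scope ring_scope.

Lemma rat_eq (P Q n0 n : int) (j0 j i t : nat) : Q != 0 ->
  n0%:~R * ((P%:~R / Q%:~R) ^+ (i+t)) + j0%:R - j%:R = n%:~R * (P%:~R/Q%:~R)^+i :> rat ->
  P ^+ (i+t) * n0 + (j0%:Z - j%:Z) * Q ^+ (i+t) = n * P ^+ i * Q ^+ t.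
Proof.
move=> hQ H; apply: (intr_inj (R:=rat)).
rewrite !(rmorphD, rmorphN, rmorphM, rmorphXn) /= -!pmulrn.
have hQ' : (Q%:~R : rat) != 0 by rewrite intr_eq0.
move: H; rewrite !exprMn !exprVn !exprD => H.
have hi : (Q%:~R : rat) ^+ i != 0 by rewrite expf_neq0.
have ht : (Q%:~R : rat) ^+ t != 0 by rewrite expf_neq0.
transitivity ((n0%:~R * (P%:~R ^+ i * P%:~R ^+ t * ((Q%:~R ^+ i * Q%:~R ^+ t)^-1)) + j0%:R - j%:R) * (Q%:~R ^+ i * Q%:~R ^+ t) : rat).
  by field; rewrite hi ht.
rewrite H; by field.
Qed.

Lemma hsubst_nz (K : fieldType) (f : int -> K) (g r : rat) : g != 0 -> hsubst f g r != 0 ->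
  exists2 n : int, f n != 0 & r = n%:~R * g.
Proof.
rewrite /hsubst => hg; case: (eqVneq (denq (r/g)) 1) => hd hn; last by rewrite eqxx in hn.
exists (numq (r/g)) => //.
have := divq_num_den (r/g); rewrite hd divr1 => ->; by rewrite divfK.
Qed.

Lemma hsubst_eq (K : fieldType) (f : int -> K) (g : rat) (n : int) : g != 0 ->
  hsubst f g (n%:~R * g) = f n.
Proof. by move=> hg; rewrite /hsubst mulfK // denq_int numq_int eqxx. Qed.

Lemma aux_bound (N n Q : int) : 1 <= Q -> n < - `|N| -> n * Q < N.
Proof.
move=> hQ hn.
have hN' := ler_norm (- N); rewrite normrN in hN'.
have hN0 := normr_ge0 N.
have hn0 : n <= 0 by apply: le_trans (ltW hn) _; rewrite oppr_le0.
have hQ1 : 0 <= Q - 1 by rewrite subr_ge0.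
have := mulr_le0_ge0 hn0 hQ1; rewrite mulrBr mulr1 subr_le0 => hm.
by apply: le_lt_trans hm _; apply: lt_le_trans hn _; rewrite lerNl.
Qed.

Theorem mainTheorem4 (K : fieldExtType rat) (p q : nat)
  (hp : (0 < p)%N) (hq : (0 < q)%N) (hcop : coprime p q)
  (hnotint : q != 1%N) (hnotinv : p != 1%N)
  (f : int -> K) (hf : laurent 0 f)
  (d : nat) (P : nat -> {poly K}) (hPd : P d != 0)
  (heq : forall e : rat,
     \sum_(i < d.+1)
        hmulpoly (P i) (hsubst f ((p%:R / q%:R) ^+ i)) e = 0) :
  exists g : int -> K, laurent 0 g /\ f = lsubst g (q ^ d).
Proof.
set a : rat := p%:R / q%:R in heq.
have haE : a = (p%:Z)%:~R / (q%:Z)%:~R by rewrite /a -!pmulrn.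
have hq0 : (q%:Z) != 0 by rewrite eqz_nat -lt0n.
have hp0 : (p%:Z) != 0 by rewrite eqz_nat -lt0n.
have ha0 : a != 0 by rewrite haE mulf_neq0 ?invr_eq0 ?intr_eq0.
have hcopz : coprimez (p%:Z) (q%:Z) by rewrite coprimezE.
have hgauss : forall k x, (q%:Z ^+ k %| p%:Z ^+ d * x)%Z -> (q%:Z ^+ k %| x)%Z.
  move=> k x; rewrite Gauss_dvdzr //; apply: coprimezXl; apply: coprimezXr.
  by rewrite coprimez_sym.
have [N hN] := hf.
have claim : forall k, (k <= d)%N -> forall n, f n != 0 -> (q%:Z ^+ k %| n)%Z.
  elim=> [|k IHk] hk; first by move=> n _; rewrite expr0 dvd1z.
  have IH := IHk (ltnW hk).
  suff H : forall t : nat, forall n, n < N + t%:Z -> f n != 0 -> (q%:Z ^+ k.+1 %| n)%Z.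
    move=> n hn; apply: (H `|n - N|%N.+1) hn.
    have := ler_norm (n - N); rewrite -abszE; lia.
  elim=> [|t IHt] n0 hn0 hfn0.
    by move: hfn0; rewrite addr0 in hn0; rewrite hN // eqxx.
  apply/negPn/negP => hbad.
  have Hsmall : forall n, n < n0 -> f n != 0 -> (q%:Z ^+ k.+1 %| n)%Z.
    move=> n hn; apply: IHt; lia.
  have hex : exists j, (P d)`_j != 0.
    by exists (size (P d)).-1; rewrite -lead_coefE lead_coef_eq0.
  case: (ex_minnP hex) => j0 hj0 hmin.
  have hj0s : (j0 < size (P d))%N.
    by rewrite ltnNge; apply: contra hj0 => hs; rewrite nth_default.
  set e : rat := n0%:~R * a ^+ d + j0%:R.
  have van : forall (i j : nat), (i <= d)%N -> ~~ ((i == d) && (j == j0)) ->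
      (P i)`_j * hsubst f (a ^+ i) (e - j%:R) = 0.
    move=> i j hid hij.
    have [->|hPij] := eqVneq (P i)`_j 0; first by rewrite mul0r.
    have [->|hnz] := eqVneq (hsubst f (a ^+ i) (e - j%:R)) 0; first by rewrite mulr0.
    have [n hfn hn] := @hsubst_nz _ f _ _ (expf_neq0 i ha0) hnz.
    have hE := @rat_eq (p%:Z) (q%:Z) n0 n j0 j i (d - i)%N hq0.
    rewrite subnKC // -haE in hE.
    move: hE; rewrite -hn /e => /(_ erefl) hE.
    case: (ltnP i d) => hid'.
    - have hqn := IH n hfn.
      suff : (q%:Z ^+ k.+1 %| n0)%Z by rewrite (negPf hbad).
      apply: (hgauss k.+1 n0).
      have -> : p%:Z ^+ d * n0 = n * p%:Z ^+ i * q%:Z ^+ (d - i) - (j0%:Z - j%:Z) * q%:Z ^+ d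
        by rewrite -hE addrK.
      apply: rpredB.
      + rewrite -mulrA exprSr; apply: dvdz_mul hqn _; apply: dvdz_mull.
        by apply: dvdz_exp; [rewrite subn_gt0 | exact: dvdzz].
      + by apply: dvdz_mull; exact: dvdz_exp2l hk.
    - have hid2 : i = d by apply/eqP; rewrite eqn_leq hid hid'.
      subst i; rewrite subnn expr0 mulr1 in hE.
      have hjj : (j0 <= j)%N by apply: hmin.
      have hj : (j0 < j)%N by rewrite ltn_neqAle hjj andbT eq_sym; rewrite eqxx in hij.
      have hpd : 0 < p%:Z ^+ d by rewrite exprn_gt0 // ltz_nat.
      have hqd : 0 < q%:Z ^+ d by rewrite exprn_gt0 // ltz_nat.
      have hlt : n < n0.
        rewrite -(ltr_pM2r hpd) [n0 * _]mulrC -hE gtrDl pmulr_llt0 // subr_lt0 ltz_nat //.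
      have hdn := Hsmall n hlt hfn.
      suff : (q%:Z ^+ k.+1 %| n0)%Z by rewrite (negPf hbad).
      apply: (hgauss k.+1 n0).
      have -> : p%:Z ^+ d * n0 = n * p%:Z ^+ d - (j0%:Z - j%:Z) * q%:Z ^+ d
        by rewrite -hE addrK.
      apply: rpredB; [exact: dvdz_mulr | apply: dvdz_mull; exact: dvdz_exp2l hk].
  have := heq e.
  rewrite (bigD1 ord_max) //= {1}/hmulpoly (bigD1 (Ordinal hj0s)) //=.
  rewrite big1 ?addr0; last first.
    move=> j hj; apply: van => //; rewrite eqxx /=.
    by apply: contra hj => /eqP hj'; apply/eqP/val_inj.
  rewrite big1 ?addr0; last first.
    move=> i hi; rewrite /hmulpoly big1 // => j _; apply: van; first by rewrite -ltnS.
    by apply: contra hi => /andP[/eqP hi' _]; apply/eqP/val_inj.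
  have -> : e - j0%:R = n0%:~R * a ^+ d by rewrite /e addrK.
  rewrite hsubst_eq ?expf_neq0 //.
  by move/eqP; rewrite mulf_eq0 (negPf hj0) (negPf hfn0).
have hall := claim d (leqnn d).
have hQ : ((q ^ d)%N : int) = q%:Z ^+ d by rewrite -natz natrX natz.
exists (fun n => f (n * (q%:Z ^+ d))); split.
  exists (- `|N|) => n hn; apply: hN.
  have hq1 : 1 <= q%:Z ^+ d by rewrite exprn_ege1 // lez_nat.
  exact: aux_bound hq1 hn.
apply: functional_extensionality => n; rewrite /lsubst hQ; case: ifP => hd.
  by rewrite divzK.
apply/eqP; apply: contraFT hd => hfn; exact: hall.
Qed.
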